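(* Every countable subgroup of $(\mathbb R,+)$ that is not finitely generated has exactly one end. In particular, the group $(\mathbb Q,+)$ has one end.
   Context: For a countable group $G$ equipped with a proper left-invariant metric (balls finite, $d(gh_1,gh_2)=d(h_1,h_2)$), the number of ends of $G$ is the cardinality of $CF(G)\setminus G$, where for a proper metric space $X$, $CF(X)$ is the compactification induced by all continuous glacially oscillating functions $X\to[0,1]$ (a function $f$ is glacially oscillating if for every $\epsilon>0$ there is a glacial scale $\mathcal S=\{(K_i,n_i)\}$ — $K_i$ bounded, $n_i\in\mathbb N$, with every bounded set contained in some $K_i$ having $n_i$ arbitrarily large — such that $|f(x_1)-f(x_n)|<\epsilon$ whenever $x_1,\dots,x_n$ is a sequence where each consecutive pair avoids some $K_m$ and is at distance $\le n_m$). Equivalently, an infinite $G$ has one end iff every almost invariant subset $A$ ($A\,\Delta\,(Ag)$ finite for all $g$) is finite or has finite complement. *)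

(* Defs.v *)
From HB Require Import structures.
From mathcomp Require Import all_boot all_order all_algebra.
From mathcomp Require Import boolp classical_sets cardinality reals.
Set Implicit Arguments. Unset Strict Implicit. Unset Printing Implicit Defensive.
Import Order.TTheory GRing.Theory Num.Theory.
Local Open Scope ring_scope.
Local Open Scope classical_set_scope.

Section Metric.
Variables (R : realType) (T : Type) (d : T -> T -> R).

Definition is_metric : Prop :=
  (forall x y, 0 <= d x y) /\ (forall x y, d x y = 0 <-> x = y) /\
  (forall x y, d x y = d y x) /\ (forall x y z, d x z <= d x y + d y z).

Definition proper_metric : Prop :=
  forall (x : T) (r : R), finite_set [set y | d x y <= r].

Definition bounded_set (B : set T) : Prop :=
  exists (x : T) (r : R), B `<=` [set y | d x y <= r].

Definition glacial_scale (S : set (set T * nat)) : Prop :=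
  (forall K n, S (K, n) -> bounded_set K) /\
  (forall B, bounded_set B -> forall N : nat,
     exists K n, [/\ S (K, n), B `<=` K & (N <= n)%N]).

Definition S_step (S : set (set T * nat)) (x y : T) : Prop :=
  exists K n, [/\ S (K, n), ~ K x, ~ K y & d x y <= n%:R].

(* x0 :: s is an S-chain (a sequence x_1 = x0, ..., x_n = last x0 s) *)
Fixpoint S_chain (S : set (set T * nat)) (x0 : T) (s : seq T) : Prop :=
  match s with
  | [::] => True
  | y :: s' => S_step S x0 y /\ S_chain S y s'
  end.

Definition glacially_oscillating (f : T -> R) : Prop :=
  forall eps : R, 0 < eps -> exists S, glacial_scale S /\
    forall (x0 : T) (s : seq T), S_chain S x0 s -> `|f x0 - f (last x0 s)| < eps.

Definition metric_continuous (f : T -> R) : Prop :=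
  forall (x : T) (eps : R), 0 < eps -> exists delta : R, 0 < delta /\
    forall y, d x y < delta -> `|f x - f y| < eps.

Definition GOfun := {f : T -> R |
  [/\ forall x, 0 <= f x <= 1, metric_continuous f & glacially_oscillating f]}.

(* CF(T) = closure of the image of the evaluation embedding T -> [0,1]^GOfun
   (product topology); points of [0,1]^GOfun are functions GOfun -> R. *)
Definition in_CF (p : GOfun -> R) : Prop :=
  forall (n : nat) (fs : 'I_n -> GOfun) (eps : R), 0 < eps ->
    exists x : T, forall i, `|sval (fs i) x - p (fs i)| < eps.

Definition in_image (p : GOfun -> R) : Prop :=
  exists x : T, forall f : GOfun, p f = sval f x.

Definition has_one_end : Prop :=
  exists p, [/\ in_CF p, ~ in_image p &
    forall q, in_CF q -> ~ in_image q -> q = p].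

End Metric.

Section Subgroups.
Variable R : realType.

Definition is_subgroup (G : set R) : Prop :=
  G 0 /\ forall x y, G x -> G y -> G (x - y).

Definition finitely_generated (G : set R) : Prop :=
  exists s : seq R, G = [set x | exists c : 'I_(size s) -> int,
                                   x = \sum_(i < size s) (c i)%:~R * s`_i].

Definition left_invariant (G : set R) (d : {x : R | G x} -> {x : R | G x} -> R) :=
  forall g h1 h2 k1 k2 : {x : R | G x},
    sval k1 = sval g + sval h1 -> sval k2 = sval g + sval h2 -> d k1 k2 = d h1 h2.

Definition rationals : set R := [set x | exists q : rat, x = ratr q].

End Subgroups.

(* Main.v *)
Require Import Defs.
From HB Require Import structures.
From mathcomp Require Import all_boot all_order all_algebra.
From mathcomp Require Import boolp classical_sets cardinality reals.
From mathcomp Require Import ring lra zify.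
Set Implicit Arguments. Unset Strict Implicit. Unset Printing Implicit Defensive.
Import Order.TTheory GRing.Theory Num.Theory.
Local Open Scope ring_scope.
Local Open Scope classical_set_scope.

Section Basic.
Variables (R : realType) (G : set R).
Hypothesis hG : is_subgroup G.

Lemma G0 : G 0. Proof. by case: hG. Qed.
Lemma GB x y : G x -> G y -> G (x - y). Proof. by case: hG => _; apply. Qed.
Lemma GN x : G x -> G (- x).
Proof. by move=> h; have := GB G0 h; rewrite sub0r. Qed.
Lemma GD x y : G x -> G y -> G (x + y).
Proof. by move=> hx hy; have := GB hx (GN hy); rewrite opprK. Qed.
Lemma GMn x n : G x -> G (x *+ n).
Proof. move=> hx; elim: n => [|n IH]; first by rewrite mulr0n; exact: G0.
by rewrite mulrS; apply: GD. Qed.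
Lemma GMz x (z : int) : G x -> G (x *~ z).
Proof. move=> hx; case: z => n; first exact: GMn.
by rewrite NegzE mulrNz; apply: GN; apply: GMn. Qed.

Definition spanS (s : seq R) : set R := [set x | exists c : 'I_(size s) -> int,
                                   x = \sum_(i < size s) (c i)%:~R * s`_i].

Lemma span_sub s : (forall x, x \in s -> G x) -> spanS s `<=` G.
Proof.
move=> hs x [c ->]; apply: (big_ind G) => //; [exact: G0|exact: GD|].
move=> i _; rewrite mulrzl; apply: GMz; apply: hs; exact: mem_nth.
Qed.

Lemma span_add s x y : spanS s x -> spanS s y -> spanS s (x + y).
Proof.
move=> [c ->] [c' ->]; exists (fun i => c i + c' i).
by rewrite -big_split /=; apply: eq_bigr => i _; rewrite intrD mulrDl.
Qed.

Lemma span_nth s (i : 'I_(size s)) (z : int) : spanS s (z%:~R * s`_i).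
Proof.
exists (fun j => if j == i then z else 0).
rewrite (bigD1 i) //= eqxx big1 ?addr0 // => j /negbTE ->; by rewrite mul0r.
Qed.

Lemma span_mem s x (z : int) : x \in s -> spanS s (z%:~R * x).
Proof.
move=> hx; have hi : (index x s < size s)%N by rewrite index_mem.
by have := span_nth (Ordinal hi) z; rewrite /= nth_index.
Qed.

End Basic.

Section Ends.
Variables (R : realType) (G : set R).
Hypothesis hG : is_subgroup G.
Local Notation T := {x : R | G x}.
Variable d : T -> T -> R.
Hypotheses (hm : is_metric d) (hp : proper_metric d) (hi : left_invariant d).
Hypothesis nfg : ~ finitely_generated G.

Definition tz : T := exist G 0 (G0 hG).
Definition mkT (r : R) : T :=
  match pselect (G r) with left h => exist G r h | right _ => tz end.
Lemma mkTE r : G r -> sval (mkT r) = r.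
Proof. by rewrite /mkT; case: pselect. Qed.
Lemma sval_inj (x y : T) : sval x = sval y -> x = y.
Proof. by case: x => x hx; case: y => y hy /= e; apply: eq_exist. Qed.
Lemma mkT_sval x : mkT (sval x) = x.
Proof. by apply: sval_inj; rewrite mkTE //; exact: svalP. Qed.

Definition nrm (r : R) := d tz (mkT r).

Lemma d_ge0 x y : 0 <= d x y. Proof. by case: hm. Qed.
Lemma d_sym x y : d x y = d y x. Proof. by case: hm => _ [_ []]. Qed.
Lemma d_tri x y z : d x z <= d x y + d y z. Proof. by case: hm => _ [_ [_]]. Qed.
Lemma nrm_ge0 r : 0 <= nrm r. Proof. exact: d_ge0. Qed.

Lemma dsub x y : d x y = nrm (sval y - sval x).
Proof.
have Gd : G (sval y - sval x) by apply: GB => //; exact: svalP.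
apply: (hi (g := x) (h1 := tz) (h2 := mkT (sval y - sval x))) => /=.
  by rewrite addr0.
by rewrite mkTE // addrC subrK.
Qed.

Lemma bounded_finite K : bounded_set d K -> finite_set K.
Proof. move=> [x [r hK]]; exact: (sub_finite_set hK (hp x r)). Qed.

Lemma fin_list (K : set T) : finite_set K ->
  exists l : seq R, (forall x, K x -> sval x \in l) /\ (forall r, r \in l -> G r).
Proof.
move=> /(finite_image sval) /finite_seqP [l hl]; exists l; split.
  move=> x Kx; have : [set` l] (sval x) by rewrite -hl; exists x.
  done.
move=> r rl; have : (sval @` K) r by rewrite hl.
by case=> x _ <-; exact: svalP.
Qed.


Lemma norm_le_sum (l : seq R) x : x \in l -> `|x| <= \sum_(y <- l) `|y|.
Proof.
move=> xl; rewrite (perm_big _ (perm_to_rem xl)) big_cons lerDl.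
by apply: sumr_ge0.
Qed.

Lemma avoid (e u : R) (l : seq R) : e != 0 ->
  exists k0, forall k, (k0 <= k)%N -> u + e *+ k \notin l.
Proof.
move=> e0; set M := \sum_(y <- l) `|y|.
have ep : 0 < `|e| by rewrite normr_gt0.
have M0 : 0 <= M by apply: sumr_ge0.
have hM : 0 <= (M + `|u|) / `|e| by apply: divr_ge0 => //; apply: addr_ge0.
exists (Num.Def.archi_bound ((M + `|u|) / `|e|)) => k hk; apply/negP => kl.
have h1 := norm_le_sum kl.
have h2 : (M + `|u|) / `|e| < k%:R.
  apply: (lt_le_trans (archi_boundP hM)); by rewrite ler_nat.
rewrite ltr_pdivrMr // in h2.
have h3 : `|e *+ k| = k%:R * `|e| by rewrite normrMn mulr_natl.
have h4 := lerB_normD (e *+ k) u.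
rewrite (addrC (e *+ k)) h3 in h4.
have h5 : k%:R * `|e| <= M + `|u|.
  by rewrite -lerBlDr; apply: le_trans h4 h1.
by move: h2; rewrite ltNge h5.
Qed.

Definition Reach S x y := exists s, S_chain d S x s /\ last x s = y.

Lemma chain_cat S x s1 s2 : S_chain d S x s1 -> S_chain d S (last x s1) s2 ->
  S_chain d S x (s1 ++ s2).
Proof. by elim: s1 x => [|z s IH] x //= [h1 h2] h3; split => //; apply: IH. Qed.

Lemma Reach_trans S x y z : Reach S x y -> Reach S y z -> Reach S x z.
Proof.
move=> [s1 [h1 <-]] [s2 [h2 <-]]; exists (s1 ++ s2); split.
  exact: chain_cat.
by rewrite last_cat.
Qed.

Lemma Reach_refl S x : Reach S x x.
Proof. by exists [::]. Qed.

Lemma Reach_step S x y : S_step d S x y -> Reach S x y.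
Proof. by move=> h; exists [:: y]. Qed.

Lemma step_sym S x y : S_step d S x y -> S_step d S y x.
Proof. by case=> K [n [? ? ? h]]; exists K, n; split => //; rewrite d_sym. Qed.

Lemma Reach_sym S x y : Reach S x y -> Reach S y x.
Proof.
move=> [s [hs <-]]; elim: s x hs => [|z s IH] x /=; first by move=> _; exists [::].
case=> hxz hs; apply: Reach_trans (IH z hs) _.
by apply: Reach_step; apply: step_sym.
Qed.

Lemma exists_e : exists e, G e /\ e != 0.
Proof.
apply: contrapT => ne; apply: nfg; exists [::]; apply/seteqP; split => x /=.
  move=> Gx; case: (eqVneq x 0) => [->|nx].
    by exists (fun _ => 0); rewrite big_ord0.
  by exfalso; apply: ne; exists x.
by move=> [c ->]; rewrite big_ord0; exact: G0.
Qed.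

Lemma span_memz (s : seq R) x (z : int) : x \in s -> spanS s (x *~ z).
Proof. by rewrite -mulrzl; apply: span_mem. Qed.

Lemma exists_c e (l : seq R) : G e -> (forall r, r \in l -> G r) ->
  exists c, G c /\ forall a a' k k', a \in l -> a' \in l ->
     c != a' - a + e *+ k - e *+ k'.
Proof.
move=> Ge Gl; apply: contrapT => nc; apply: nfg.
set s := e :: [seq a' - a | a <- l, a' <- l].
exists s; apply/seteqP; split => x.
  move=> Gx.
  have : exists a a' k k', [/\ a \in l, a' \in l & x = a' - a + e *+ k - e *+ k'].
    apply: contrapT => nx; apply: nc; exists x; split => // a a' k k' al a'l.
    by apply/eqP => ex; apply: nx; exists a, a', k, k'; split.
  case=> a [a' [k [k' [al a'l ->]]]].
  have hs1 : (a' - a) \in s.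
    by rewrite inE; apply/orP; right; apply/allpairsP; exists (a, a').
  have he : e \in s by rewrite inE eqxx.
  apply: span_add; first apply: span_add.
  - by have := span_memz 1 hs1; rewrite mulr1z.
  - by have := span_memz k he; rewrite -pmulrn.
  - by have := span_memz (- (k'%:Z)) he; rewrite mulrNz -pmulrn.
apply: span_sub => // r; rewrite inE => /orP [/eqP ->//|].
by move=> /allpairsP [[a a'] [/= al a'l ->]]; apply: (GB hG); apply: Gl.
Qed.


Lemma key (f : T -> R) eps : glacially_oscillating d f -> 0 < eps ->
  exists r, forall x y, r < d tz x -> r < d tz y -> `|f x - f y| < eps.
Proof.
move=> h ep; case: (h eps ep) => S [[hS1 hS2] hch].
have reach_ok : forall x y, Reach S x y -> `|f x - f y| < eps.
  by move=> x y [s [hs <-]]; apply: hch.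
have B0 : bounded_set d set0 by exists tz, 0.
have pairN : forall a : R, exists K n, [/\ S (K, n), finite_set K & a <= n%:R].
  move=> a; have [K [n [SK _ hn]]] := hS2 _ B0 (Num.Def.archi_bound `|a|).
  exists K, n; split => //; first by apply: bounded_finite; exact: hS1 SK.
  apply: le_trans (ler_norm a) _.
  apply: (le_trans (ltW (archi_boundP (normr_ge0 a)))); by rewrite ler_nat.
case: exists_e => e [Ge e0].
have [K1 [n1 [S1 F1 hn1]]] := pairN (nrm e).
case: (fin_list F1) => l1 [hl1 Gl1].
case: (exists_c Ge Gl1) => c [Gc hc].
have [K2 [n2 [S2 _ hn2]]] := pairN (nrm c).
case: (hS1 _ _ S2) => x2 [r2 hK2].
pose uk (u : T) (k : nat) := mkT (sval u + e *+ k).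
have ukE u k : sval (uk u k) = sval u + e *+ k.
  by rewrite mkTE //; apply: GD => //; [exact: svalP|exact: GMn].
pose good (u : T) := forall k, sval u + e *+ k \notin l1.
have walk : forall u, good u -> forall k, Reach S u (uk u k).
  move=> u gu; elim=> [|k IH].
    have -> : uk u 0 = u by apply: sval_inj; rewrite ukE mulr0n addr0.
    exact: Reach_refl.
  apply: Reach_trans IH _; apply: Reach_step; exists K1, n1; split => //.
  - by move=> /hl1; rewrite ukE; apply/negP; apply: gu.
  - by move=> /hl1; rewrite ukE; apply/negP; apply: gu.
  - by rewrite dsub !ukE mulrS addrCA addrK.
have conn : forall u v, good u -> good v -> Reach S u v.
  move=> u v gu gv.
  have [K3 [n3 [S3 F3 hn3]]] := pairN (d u v).
  case: (fin_list F3) => l3 [hl3 _].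
  case: (avoid (sval u) l3 e0) => ku hku.
  case: (avoid (sval v) l3 e0) => kv hkv.
  pose k := maxn ku kv.
  apply: Reach_trans (walk u gu k) _.
  apply: Reach_trans (Reach_sym (walk v gv k)).
  apply: Reach_step; exists K3, n3; split => //.
  - by move=> /hl3; rewrite ukE; apply/negP; apply: hku; exact: leq_maxl.
  - by move=> /hl3; rewrite ukE; apply/negP; apply: hkv; exact: leq_maxr.
  - rewrite dsub !ukE opprD addrACA subrr addr0 -dsub; exact: hn3.
have far_good : forall x, d tz x2 + r2 + nrm c < d tz x ->
    exists u, good u /\ Reach S x u.
  move=> x hx.
  have nK2 : forall y, d tz x2 + r2 < d tz y -> ~ K2 y.
    move=> y hy /hK2 /= hy2; have := d_tri tz x2 y; lra.
  have Gx : G (sval x + c) by apply: GD => //; exact: svalP.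
  pose xc := mkT (sval x + c).
  have dxc : d x xc = nrm c by rewrite dsub mkTE // addrAC subrr add0r.
  case: (pselect (good x)) => gx; first by exists x; split => //; exact: Reach_refl.
  exists xc; split.
  - move=> k; apply/negP => hk; apply: gx => k'; apply/negP => hk'.
    rewrite mkTE // in hk.
    have := hc _ _ k' k hk' hk; move/eqP; apply.
    ring.
  - apply: Reach_step; exists K2, n2; split => //.
    + apply: nK2; have := nrm_ge0 c; lra.
    + apply: nK2; have := d_tri tz xc x; rewrite (d_sym xc x) dxc; lra.
    + by rewrite dxc.
exists (d tz x2 + r2 + nrm c) => x y hx hy.
case: (far_good x hx) => u [gu hxu]; case: (far_good y hy) => v [gv hyv].
apply: reach_ok; apply: Reach_trans hxu _.
apply: Reach_trans (conn u v gu gv) _; exact: Reach_sym.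
Qed.


Lemma far_exists r : exists x, r < d tz x.
Proof.
case: (fin_list (hp tz r)) => l [hl _].
case: exists_e => e [Ge e0].
case: (avoid 0 l e0) => k0 hk0.
have Ge' : G (0 + e *+ k0) by rewrite add0r; exact: GMn.
exists (mkT (0 + e *+ k0)); rewrite ltNge; apply/negP => /hl.
by rewrite mkTE //; apply/negP; apply: hk0.
Qed.

Lemma far_exists2 r1 r2 : exists x, r1 < d tz x /\ r2 < d tz x.
Proof.
case: (far_exists (Order.max r1 r2)) => x; rewrite gt_max => /andP [h1 h2].
by exists x.
Qed.

Definition Lim (f : GOfun d) :=
  sup [set a | exists r, forall x, r < d tz x -> a <= sval f x].

Lemma LimP (f : GOfun d) eps : 0 < eps ->
  exists r, forall x, r < d tz x -> `|sval f x - Lim f| <= eps.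
Proof.
move=> ep; case: (svalP f) => _ _ hgo.
have ep2 : 0 < eps / 2 by apply: divr_gt0.
case: (key hgo ep2) => r0 hr0.
case: (far_exists r0) => x0 hx0.
set E := [set a | exists r, forall x, r < d tz x -> a <= sval f x].
have E1 : E (sval f x0 - eps / 2).
  exists r0 => x hx; have := hr0 _ _ hx0 hx; rewrite ltr_norml => /andP [h1 h2].
  lra.
have E2 : ubound E (sval f x0 + eps / 2).
  move=> a [ra hra]; case: (far_exists2 ra r0) => x [h1 h2].
  have := hra _ h1; have := hr0 _ _ hx0 h2; rewrite ltr_norml => /andP [h3 h4].
  lra.
have hE : has_ubound E by exists (sval f x0 + eps / 2).
have L1 : sval f x0 - eps / 2 <= Lim f by apply: ub_le_sup.
have L2 : Lim f <= sval f x0 + eps / 2 by apply: ge_sup => //; exists (sval f x0 - eps / 2).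
exists r0 => x hx; have := hr0 _ _ hx0 hx; rewrite ltr_norml ler_norml => /andP [h3 h4].
apply/andP; split; lra.
Qed.

Lemma le_sum_abs n (r : 'I_n -> R) i : r i <= \sum_(j < n) `|r j|.
Proof.
rewrite (bigD1 i) //=; apply: le_trans (ler_norm (r i)) _.
by rewrite lerDl; apply: sumr_ge0.
Qed.

Lemma inCF_Lim : in_CF (fun f : GOfun d => Lim f).
Proof.
move=> n fs eps ep.
have ep2 : 0 < eps / 2 by apply: divr_gt0.
case: (choice (fun i => LimP (fs i) ep2)) => r hr.
case: (far_exists (\sum_(j < n) `|r j|)) => x hx.
exists x => i.
apply: le_lt_trans (hr i x (le_lt_trans (le_sum_abs r i) hx)) _.
lra.
Qed.


Lemma max0_lip (a b : R) :
  - `|a - b| <= Order.max 0 a - Order.max 0 b <= `|a - b|.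
Proof.
have h1 := ler_norm (a - b); have h2 := ler_norm (b - a); rewrite distrC in h2.
have [ha|ha] := leP 0 a; have [hb|hb] := leP 0 b;
  rewrite ?(max_r ha) ?(max_r hb) ?(max_l (ltW ha)) ?(max_l (ltW hb));
  apply/andP; split; lra.
Qed.

Definition bump (x0 : T) (y : T) : R := Order.max 0 (1 - d x0 y).

Lemma bump_far x0 y : 1 < d x0 y -> bump x0 y = 0.
Proof. by move=> h; rewrite /bump max_l //; lra. Qed.

Lemma chain_ends (S : set (set T * nat)) (P : T -> Prop) a s :
  (forall x y, S_step d S x y -> P x /\ P y) ->
  S_chain d S a s -> s <> [::] -> P a /\ P (last a s).
Proof.
move=> hP; elim: s a => [|z s IH] a //= [hs hc] _.
case: s IH hc => [|w s] IH hc /=; first exact: hP.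
split; first by case: (hP _ _ hs).
by case: (IH z hc).
Qed.

Lemma bump_GO x0 : [/\ forall x, 0 <= bump x0 x <= 1, metric_continuous d (bump x0)
   & glacially_oscillating d (bump x0)].
Proof.
split.
- move=> x; rewrite /bump le_max lexx /= ge_max ler01 /=.
  have := d_ge0 x0 x; lra.
- move=> x eps ep; exists eps; split => // y hy.
  have := max0_lip (1 - d x0 x) (1 - d x0 y).
  have t1 := d_tri x0 x y; have t2 := d_tri x0 y x; rewrite (d_sym y x) in t2.
  have := ler_norm ((1 - d x0 x) - (1 - d x0 y)).
  have := ler_norm (- ((1 - d x0 x) - (1 - d x0 y))).
  rewrite normrN => n1 n2.
  have hn : `|(1 - d x0 x) - (1 - d x0 y)| <= d x y.
    rewrite ler_norml; apply/andP; split; lra.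
  rewrite /bump ltr_norml => /andP [m1 m2]; apply/andP; split; lra.
- move=> eps ep.
  exists [set p | bounded_set d p.1 /\ [set y | d x0 y <= 1] `<=` p.1]; split.
    split; first by move=> K n [].
    move=> B [b [rb hB]] N.
    exists (B `|` [set y | d x0 y <= 1]), N; split; [split|by move=> y; left|by []].
      exists b, (`|rb| + d b x0 + 1) => y [/hB /= h|/= h].
        have := d_ge0 b x0; have := ler_norm rb; lra.
      have := d_tri b x0 y; have := normr_ge0 rb; lra.
    by move=> y hy; right.
  move=> a s hc.
  case: (pselect (s = [::])) => [->|sn]; first by rewrite /= subrr normr0.
  have hst : forall x y, S_step d [set p | bounded_set d p.1 /\ [set y | d x0 y <= 1] `<=` p.1] x y -> 1 < d x0 x /\ 1 < d x0 y.
    move=> x y [K [n [[_ hK] nx ny _]]]; split.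
      by rewrite ltNge; apply/negP => h; apply: nx; apply: hK.
    by rewrite ltNge; apply/negP => h; apply: ny; apply: hK.
  have [ha hl] := chain_ends hst hc sn.
  by rewrite !bump_far // subrr normr0.
Qed.



Lemma notimg : ~ in_image (fun f : GOfun d => Lim f).
Proof.
move=> [x0 hx0].
pose f0 : GOfun d := exist _ (bump x0) (bump_GO x0).
have h1 := hx0 f0.
have dxx : d x0 x0 = 0 by case: hm => _ [h _]; apply/h.
have hb : bump x0 x0 = 1 by rewrite /bump dxx subr0 max_r // ler01.
have hh : (0:R) < 1 / 2 by lra.
case: (LimP f0 hh) => r hr.
case: (far_exists2 r (d tz x0 + 1)) => x [h2 h3].
have hf : 1 < d x0 x by have := d_tri tz x0 x; lra.
have := hr x h2; rewrite /= bump_far // h1 /= hb sub0r normrN normr1.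
lra.
Qed.

Lemma uniq_end q : in_CF q -> ~ in_image q -> q = (fun f => Lim f).
Proof.
move=> qCF qni; apply: funext => f; apply: contrapT => hne.
have dpos : 0 < `|q f - Lim f| by rewrite normr_gt0 subr_eq0; apply/eqP.
set δ := `|q f - Lim f| in dpos.
have d4 : 0 < δ / 4 by apply: divr_gt0.
case: (LimP f d4) => r hr.
have hg : forall x : T, exists g : GOfun d, q g != sval g x.
  move=> x; apply: contrapT => nh; apply: qni; exists x => g.
  apply: contrapT => ng; apply: nh; exists g; exact/eqP.
case: (choice hg) => g hgP.
case: (fin_list (hp tz r)) => l [hl _].
pose dR (y : R) := `|q (g (mkT y)) - sval (g (mkT y)) (mkT y)|.
have dRpos y : 0 < dR y by rewrite normr_gt0 subr_eq0; exact: hgP.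
pose eps := foldr (fun y m => Order.min (dR y) m) (δ / 4) l.
have heps : [/\ 0 < eps, eps <= δ / 4 & forall y, y \in l -> eps <= dR y].
  rewrite /eps; elim: (l) => [|y l' [IH1 IH2 IH3]] /=.
    by split => // y; rewrite in_nil.
  split; first by rewrite lt_min dRpos IH1.
    by rewrite ge_min IH2 orbT.
  move=> z; rewrite inE => /orP [/eqP ->|zl]; first by rewrite ge_min lexx.
  by rewrite ge_min IH3 ?orbT.
case: heps => e0 e1 e2.
pose fs (i : 'I_(size l).+1) : GOfun d :=
  if nat_of_ord i is j.+1 then g (mkT (nth 0 l j)) else f.
case: (qCF _ fs eps e0) => x hx.
have h0 := hx ord0; rewrite /fs /= in h0.
case: (leP (d tz x) r) => hxr.
- have xl := hl x hxr.
  have hj : ((index (sval x) l).+1 < (size l).+1)%N by rewrite ltnS index_mem.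
  have := hx (Ordinal hj); rewrite /fs /= nth_index // mkT_sval => h6.
  have := e2 _ xl; rewrite /dR mkT_sval distrC => h5.
  by have := lt_le_trans h6 h5; rewrite ltxx.
- have t := ler_distD (sval f x) (q f) (Lim f); rewrite -/δ in t.
  rewrite distrC in h0.
  have t2 := hr x hxr.
  lra.
Qed.

Theorem one_end : has_one_end d.
Proof.
exists (fun f => Lim f); split; [exact: inCF_Lim|exact: notimg|].
by move=> q h1 h2; apply: uniq_end.
Qed.

End Ends.

Lemma rat_sub (R : realType) : is_subgroup (@rationals R).
Proof.
split; first by exists 0; rewrite rmorph0.
by move=> x y [p ->] [q ->]; exists (p - q); rewrite rmorphB.
Qed.

Lemma rat_nfg (R : realType) : ~ finitely_generated (@rationals R).
Proof.
move=> [s hs].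
have hsi : forall i : 'I_(size s), exists q : rat, s`_i = ratr q.
  move=> i; have : spanS s (1%:~R * s`_i) by apply: span_nth.
  by rewrite mul1r -[spanS s]/([set x | _]) -hs.
case: (choice hsi) => q hq.
pose D := \prod_(i < size s) denq (q i).
have D0 : D != 0 by apply/prodf_neq0 => i _; exact: denq_neq0.
have hz : forall i : 'I_(size s), exists z : int, s`_i * D%:~R = z%:~R.
  move=> i; exists (numq (q i) * \prod_(j < size s | j != i) denq (q j)).
  rewrite /D (bigD1 i) //= !intrM hq mulrA; congr (_ * _).
  by have := congr1 (@ratr R) (numqE (q i)); rewrite rmorphM !rmorph_int => ->.
case: (choice hz) => z hzP.
have hspan : forall x, spanS s x -> exists w : int, x * D%:~R = w%:~R.
  move=> x [c ->]; exists (\sum_(i < size s) c i * z i).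
  rewrite mulr_suml rmorph_sum /=; apply: eq_bigr => i _.
  by rewrite -mulrA hzP intrM.
have hx : rationals (ratr ((2 * D)%:~R)^-1 : R) by exists ((2 * D)%:~R)^-1.
rewrite hs in hx; case: (hspan _ hx) => w hw.
have D0' : (D%:~R : R) != 0 by rewrite intr_eq0.
rewrite fmorphV rmorph_int intrM in hw.
have h2 : (2 * w)%:~R = (1 : int)%:~R :> R.
  by rewrite intrM -hw; field.
have := intr_inj h2; lia.
Qed.

Theorem corollary5p13 (R : realType) :
  (forall G : set R, is_subgroup G -> countable G -> ~ finitely_generated G ->
     forall d : {x : R | G x} -> {x : R | G x} -> R,
       is_metric d -> proper_metric d -> left_invariant d -> has_one_end d)
  /\
  (forall d : {x : R | rationals x} -> {x : R | rationals x} -> R,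
     is_metric d -> proper_metric d -> left_invariant d -> has_one_end d).
Proof.
split.
  by move=> G hG _ nfg d hm hp hi; apply: one_end.
move=> d hm hp hi; apply: (one_end (rat_sub R)) => //; exact: rat_nfg.
Qed.
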